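(* Let $\mathcal{V}$ be a variety and let $e$ be a unary term in the language of $\mathcal{V}$ with $\mathcal{V}\models e(e(x))=e(x)$. (1) The class of all $\mathbf{A}\in\mathcal{V}$ for which $e$ is separating is a prevariety, i.e. it is closed under isomorphic images, subalgebras and products. (2) For $\mathbf{A},\mathbf{B}\in\mathcal{V}$ consider the map $\mathrm{Hom}(\mathbf{A},\mathbf{B})\to\mathrm{Hom}(e(\mathbf{A}),e(\mathbf{B}))$, $\varphi\mapsto\varphi|_{e(A)}$. (i) If $e$ is dense for $\mathbf{A}$, this map is injective. (ii) If $e$ is dense for $\mathbf{A}$ and separating for $\mathbf{B}$, this map is surjective.
   Context: For an algebra $\mathbf{A}$ and a unary term $e$ with $\mathbf{A}\models e(e(x))=e(x)$, the localization $e(\mathbf{A})$ is the algebra with universe $e(A)$ whose fundamental operation symbols are the symbols $et$, one for each term $t$ in the language of $\mathbf{A}$ (with the arity of $t$), where $et$ is interpreted as the restriction to $e(A)$ of the term operation $e(t(x_1,\dots,x_n))$ of $\mathbf{A}$ (under which $e(A)$ is closed). This fixes a common similarity type for all $e(\mathbf{A})$, $\mathbf{A}$ in a class satisfying $e^2=e$. For a homomorphism $\varphi:\mathbf{B}\to\mathbf{C}$, $\varphi|_{e(B)}$ is a homomorphism $e(\mathbf{B})\to e(\mathbf{C})$. The term $e$ separates $\mathbf{A}$ if for all $a\neq b$ in $A$ there is a unary term $g$ with $e(g(a))\neq e(g(b))$. The term $e$ is dense for $\mathbf{A}$ if $\mathbf{A}$ is generated as an algebra by $e(A)$. *)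

(* Defs.v *)
From Stdlib Require Import FunctionalExtensionality.
From mathcomp Require Import all_boot.
Set Implicit Arguments. Unset Strict Implicit. Unset Printing Implicit Defensive.

Record signature := Signature { ops : Type; arity : ops -> nat }.

Inductive term (sg : signature) (V : Type) : Type :=
| Var : V -> term sg V
| App : forall o : ops sg, ('I_(arity o) -> term sg V) -> term sg V.
Arguments Var {sg V}.
Arguments App {sg V}.

Record algebra (sg : signature) := Algebra {
  carrier :> Type;
  op : forall o : ops sg, ('I_(arity o) -> carrier) -> carrier }.
Arguments op {sg} _ o.

Fixpoint eval (sg : signature) (A : algebra sg) (V : Type) (v : V -> A)
    (t : term sg V) : A :=
  match t with
  | Var x => v x
  | App o args => op A o (fun i => eval v (args i))
  end.

Definition uop (sg : signature) (A : algebra sg) (t : term sg unit) (a : A) : A :=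
  eval (fun _ => a) t.

Definition models (sg : signature) (A : algebra sg) (s t : term sg nat) : Prop :=
  forall v : nat -> A, eval v s = eval v t.

Definition inV (sg : signature) (Eqs : term sg nat * term sg nat -> Prop)
    (A : algebra sg) : Prop :=
  forall s t, Eqs (s, t) -> models A s t.

Definition is_hom (sg : signature) (A B : algebra sg) (f : A -> B) : Prop :=
  forall o (args : 'I_(arity o) -> A), f (op A o args) = op B o (fun i => f (args i)).

Definition isomorphic (sg : signature) (A B : algebra sg) : Prop :=
  exists f : A -> B, is_hom f /\ bijective f.

Definition subuniverse (sg : signature) (A : algebra sg) (S : A -> Prop) : Prop :=
  forall o (args : 'I_(arity o) -> A), (forall i, S (args i)) -> S (op A o args).

Definition subalg (sg : signature) (A : algebra sg) (S : A -> Prop)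
    (HS : subuniverse S) : algebra sg :=
  @Algebra sg {a : A | S a}
    (fun o args => exist S (op A o (fun i => proj1_sig (args i)))
                          (HS o _ (fun i => proj2_sig (args i)))).

Definition prod_alg (sg : signature) (I : Type) (F : I -> algebra sg) : algebra sg :=
  @Algebra sg (forall i : I, F i) (fun o args => fun i => op (F i) o (fun j => args j i)).

Definition separates (sg : signature) (e : term sg unit) (A : algebra sg) : Prop :=
  forall a b : A, a <> b ->
    exists g : term sg unit, uop e (uop g a) <> uop e (uop g b).

Definition generated_by (sg : signature) (A : algebra sg) (X : A -> Prop) : Prop :=
  forall S : A -> Prop, subuniverse S -> (forall x, X x -> S x) -> forall a : A, S a.

Definition eimage (sg : signature) (e : term sg unit) (A : algebra sg) (a : A) : Prop :=
  exists b : A, a = uop e b.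
Arguments eimage {sg} e A a.

Definition dense (sg : signature) (e : term sg unit) (A : algebra sg) : Prop :=
  generated_by (eimage e A).

(* Localization: the signature has one symbol "et" for each term t in n variables. *)
Definition locsig (sg : signature) : signature :=
  @Signature {n : nat & term sg 'I_n} (fun p => projT1 p).

Definition loc (sg : signature) (e : term sg unit) (A : algebra sg) : algebra (locsig sg) :=
  @Algebra (locsig sg) {a : A | eimage e A a}
    (fun p args =>
       exist (eimage e A)
         (uop e (eval (fun i => proj1_sig (args i)) (projT2 p)))
         (ex_intro _ (eval (fun i => proj1_sig (args i)) (projT2 p)) erefl)).

Lemma hom_eval (sg : signature) (A B : algebra sg) (f : A -> B) (Hf : is_hom f)
  (V : Type) (v : V -> A) (t : term sg V) : f (eval v t) = eval (fun x => f (v x)) t.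
Proof.
elim: t => [x|o args IH] //=.
rewrite Hf; f_equal; apply: functional_extensionality => i; exact: IH.
Qed.

Lemma hom_eimage (sg : signature) (e : term sg unit) (A B : algebra sg) (f : A -> B)
  (Hf : is_hom f) (a : A) : eimage e A a -> eimage e B (f a).
Proof.
case=> b ->; exists (f b); rewrite /uop (hom_eval Hf); done.
Qed.

Definition res (sg : signature) (e : term sg unit) (A B : algebra sg) (f : A -> B)
  (Hf : is_hom f) : loc e A -> loc e B :=
  fun x => exist (eimage e B) (f (proj1_sig x)) (hom_eimage Hf (proj2_sig x)).
Arguments res {sg} e {A B f} Hf _.

(* Main.v *)
Require Import Defs.
From mathcomp Require Import all_boot.
From Stdlib Require Import FunctionalExtensionality ProofIrrelevance Classical ClassicalEpsilon.
Set Implicit Arguments. Unset Strict Implicit. Unset Printing Implicit Defensive.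

Section H.
Variable sg : signature.

Fixpoint tmap V W (m : V -> W) (t : term sg V) : term sg W :=
  match t with Var x => Var (m x) | App o args => App o (fun i => tmap m (args i)) end.
Fixpoint tbind V W (f : V -> term sg W) (t : term sg V) : term sg W :=
  match t with Var x => f x | App o args => App o (fun i => tbind f (args i)) end.

Lemma eval_tmap (A : algebra sg) V W (m : V -> W) (v : W -> A) t :
  eval v (tmap m t) = eval (fun x => v (m x)) t.
Proof. elim: t => [x|o args IH] //=; f_equal; apply: functional_extensionality => i; exact: IH. Qed.

Lemma eval_tbind (A : algebra sg) V W (f : V -> term sg W) (v : W -> A) t :
  eval v (tbind f t) = eval (fun x => eval v (f x)) t.
Proof. elim: t => [x|o args IH] //=; f_equal; apply: functional_extensionality => i; exact: IH. Qed.

Lemma tmap_comp V W X (m : V -> W) (m' : W -> X) t :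
  tmap m' (tmap m t) = tmap (fun x => m' (m x)) t.
Proof. elim: t => [x|o args IH] //=; f_equal; apply: functional_extensionality => i; exact: IH. Qed.

Lemma tmap_ext V W (m m' : V -> W) t : (forall x, m x = m' x) -> tmap m t = tmap m' t.
Proof. move=> H; elim: t => [x|o args IH] /=; first by rewrite H.
f_equal; apply: functional_extensionality => i; exact: IH. Qed.

Lemma finrep V (u : term sg V) :
  exists s : {n : nat & (term sg 'I_n * ('I_n -> V))%type},
    u = tmap (projT2 s).2 (projT2 s).1.
Proof.
elim: u => [x|o args IH].
  by exists (existT _ 1 (Var ord0, fun _ => x)).
pose s i := proj1_sig (constructive_indefinite_description _ (IH i)).
have Hs i : args i = tmap (projT2 (s i)).2 (projT2 (s i)).1
  := proj2_sig (constructive_indefinite_description _ (IH i)).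
pose T := {i : 'I_(arity o) & 'I_(projT1 (s i))}.
exists (existT _ #|{: T}|
  (App o (fun i => tmap (fun j => enum_rank (existT (fun i => 'I_(projT1 (s i))) i j))
                         (projT2 (s i)).1),
   fun r => let x := enum_val r in (projT2 (s (tag x))).2 (tagged x))).
simpl; f_equal; apply: functional_extensionality => i.
rewrite tmap_comp Hs; apply: tmap_ext => j; by rewrite enum_rankK.
Qed.

Lemma sig_eq (T : Type) (P : T -> Prop) (x y : sig P) : proj1_sig x = proj1_sig y -> x = y.
Proof. case: x => x px; case: y => y py /= E; subst; f_equal; apply: proof_irrelevance. Qed.

Lemma KL (e : term sg unit) (A B : algebra sg) (h : loc e A -> loc e B) (Hh : is_hom h)
  V (u : term sg V) (v : V -> loc e A) pf :
  proj1_sig (h (exist _ (uop e (eval (fun x => proj1_sig (v x)) u)) pf))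
  = uop e (eval (fun x => proj1_sig (h (v x))) u).
Proof.
case: (finrep u) => [[n [t m]]] /= Eu; subst u.
pose p : ops (locsig sg) := existT _ n t.
have -> : exist _ (uop e (eval (fun x => proj1_sig (v x)) (tmap m t))) pf
   = op (loc e A) p (fun i => v (m i)).
  by apply: sig_eq; rewrite /= eval_tmap.
by rewrite Hh /= eval_tmap.
Qed.

Variable e : term sg unit.

Lemma uop_hom (A B : algebra sg) (f : A -> B) (Hf : is_hom f) g a : f (uop g a) = uop g (f a).
Proof. by rewrite /uop (hom_eval Hf). Qed.

Lemma part_iso (Eqs : term sg nat * term sg nat -> Prop) (A B : algebra sg) :
  inV Eqs A -> separates e A -> isomorphic A B -> inV Eqs B /\ separates e B.
Proof.
move=> HA Hs [f [Hf [g fK gK]]]; split.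
  move=> s t /HA H v.
  have -> : v = (fun x => f (g (v x))) by apply: functional_extensionality => x; rewrite gK.
  by rewrite -!(hom_eval Hf) H.
move=> a b Hab.
have : g a <> g b by move=> E; apply: Hab; rewrite -(gK a) -(gK b) E.
case/Hs => t Ht; exists t => E; apply: Ht.
apply: (can_inj fK); rewrite !(uop_hom Hf) !gK; exact: E.
Qed.

Lemma eval_sub (A : algebra sg) S (HS : subuniverse S) V (v : V -> subalg HS) (t : term sg V) :
  proj1_sig (eval v t) = @eval _ A _ (fun x => proj1_sig (v x)) t.
Proof. elim: t => [x|o args IH] //=; f_equal; apply: functional_extensionality => i; exact: IH. Qed.

Lemma part_sub (Eqs : term sg nat * term sg nat -> Prop) (A : algebra sg) (S : A -> Prop)
  (HS : subuniverse S) :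
  inV Eqs A -> separates e A -> inV Eqs (subalg HS) /\ separates e (subalg HS).
Proof.
move=> HA Hs; split.
  by move=> s t /HA H v; apply: sig_eq; rewrite !eval_sub H.
move=> a b Hab.
have : proj1_sig a <> proj1_sig b by move=> E; apply: Hab; apply: sig_eq.
case/Hs => t Ht; exists t => E; apply: Ht.
have := f_equal (@proj1_sig _ _) E; rewrite /uop !eval_sub /=.
exact: id.
Qed.

Lemma eval_prod I (F : I -> algebra sg) V (v : V -> prod_alg F) (t : term sg V) i :
  eval v t i = @eval _ (F i) _ (fun x => v x i) t.
Proof. elim: t => [x|o args IH] //=; f_equal; apply: functional_extensionality => j; exact: IH. Qed.

Lemma part_prod (Eqs : term sg nat * term sg nat -> Prop) (I : Type) (F : I -> algebra sg) :
  (forall i, inV Eqs (F i) /\ separates e (F i)) ->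
      inV Eqs (prod_alg F) /\ separates e (prod_alg F).
Proof.
move=> H; split.
  move=> s t Est v; apply: functional_extensionality_dep => i.
  by rewrite !eval_prod (proj1 (H i) _ _ Est).
move=> a b Hab.
have [i Hi] : exists i, a i <> b i.
  apply: NNPP => N; apply: Hab; apply: functional_extensionality_dep => i.
  by apply: NNPP => Ni; apply: N; exists i.
case: (proj2 (H i) _ _ Hi) => t Ht; exists t => E; apply: Ht.
have := f_equal (fun z : prod_alg F => z i) E.
rewrite /uop !eval_prod /=. exact: id.
Qed.

Lemma part_inj (A B : algebra sg) : dense e A ->
  forall (f g : A -> B) (Hf : is_hom f) (Hg : is_hom g), res e Hf =1 res e Hg -> f =1 g.
Proof.
move=> Hd f g Hf Hg Hr; apply: (Hd (fun a => f a = g a)).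
  move=> o args H; rewrite Hf Hg; f_equal; exact: functional_extensionality.
move=> x Hx; exact: (f_equal (@proj1_sig _ _) (Hr (exist _ x Hx))).
Qed.

Lemma part_surj (A B : algebra sg) : dense e A -> separates e B ->
  forall h : loc e A -> loc e B, is_hom h ->
    exists (f : A -> B) (Hf : is_hom f), res e Hf =1 h.
Proof.
move=> Hd Hsep h Hh.
pose val := fun x : loc e A => proj1_sig x.
pose vh := fun x : loc e A => proj1_sig (h x).
have WD : forall u u' : term sg (loc e A), @eval _ A _ val u = eval val u' ->
    @eval _ B _ vh u = eval vh u'.
  move=> u u' Eu; apply: NNPP => Hne; case: (Hsep _ _ Hne) => g; apply.
  have K := fun w : term sg (loc e A) =>
    @KL e A B h Hh _ (tbind (fun _ => w) g) (fun x => x) (ex_intro _ _ erefl).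
  have E1 w : uop g (@eval _ B _ vh w) = eval vh (tbind (fun _ => w) g).
    by rewrite eval_tbind.
  rewrite !E1.
  rewrite -[LHS](K u) -[RHS](K u'); congr (proj1_sig (h _)); apply: sig_eq => /=.
  by rewrite !eval_tbind -/(val) Eu.
pose rep := fun a : A => exists u : term sg (loc e A), a = eval val u.
have Hrep : forall a, rep a.
  apply: Hd.
    move=> o args H.
    pose U i := proj1_sig (constructive_indefinite_description _ (H i)).
    exists (App o U) => /=; f_equal; apply: functional_extensionality => i.
    exact: (proj2_sig (constructive_indefinite_description _ (H i))).
  by move=> x Hx; exists (Var (exist _ x Hx)).
have Hex : forall a : A, exists b : B, forall u, a = eval val u -> b = eval vh u.
  move=> a; case: (Hrep a) => u0 E0; exists (eval vh u0) => u Eu.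
  by apply: WD; rewrite -E0.
pose f a := proj1_sig (constructive_indefinite_description _ (Hex a)).
have Hf a u : a = eval val u -> f a = eval vh u.
  exact: (proj2_sig (constructive_indefinite_description _ (Hex a))).
have Hhom : is_hom f.
  move=> o args.
  pose U i := proj1_sig (constructive_indefinite_description _ (Hrep (args i))).
  have HU i : args i = eval val (U i).
    exact: (proj2_sig (constructive_indefinite_description _ (Hrep (args i)))).
  rewrite (Hf _ (App o U)) /=.
    by f_equal; apply: functional_extensionality => i; rewrite (Hf _ _ (HU i)).
  by f_equal; apply: functional_extensionality => i; rewrite -HU.
exists f, Hhom => x; apply: sig_eq => /=.
by rewrite (Hf _ (Var x)).
Qed.

End H.

Theorem lemma2p2 (sg : signature) (Eqs : term sg nat * term sg nat -> Prop)
  (e : term sg unit)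
  (He : forall A : algebra sg, inV Eqs A -> forall a : A, uop e (uop e a) = uop e a) :
  ((forall A B : algebra sg, inV Eqs A -> separates e A -> isomorphic A B ->
      inV Eqs B /\ separates e B)
   /\ (forall (A : algebra sg) (S : A -> Prop) (HS : subuniverse S),
      inV Eqs A -> separates e A -> inV Eqs (subalg HS) /\ separates e (subalg HS))
   /\ (forall (I : Type) (F : I -> algebra sg),
      (forall i, inV Eqs (F i) /\ separates e (F i)) ->
      inV Eqs (prod_alg F) /\ separates e (prod_alg F)))
  /\
  (forall A B : algebra sg, inV Eqs A -> inV Eqs B -> dense e A ->
     (forall (f g : A -> B) (Hf : is_hom f) (Hg : is_hom g),
        res e Hf =1 res e Hg -> f =1 g)
     /\
     (separates e B ->
        forall h : loc e A -> loc e B, is_hom h ->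
          exists (f : A -> B) (Hf : is_hom f), res e Hf =1 h)).
Proof.
split; first split; [exact: part_iso | split; [exact: part_sub | exact: part_prod]|].
move=> A B _ _ Hd; split; [exact: part_inj | move=> Hs; exact: part_surj].
Qed.
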